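(* Let $\mathbb K$ be a field of characteristic zero and $A=\bigoplus_{i=1}^k M_{d_i}(\mathbb K)$. Let $\epsilon_0:=\bigoplus_i d_i\mathrm{Tr}_{M_{d_i}}$ (the Frobenius linear form of the unique symmetric special Frobenius structure on $A$) and, for an invertible $u=\bigoplus_i u_i\in A$, consider the twisted Frobenius structure $(a,b)_u:=\epsilon_0(uab)$. Then its F-dimension and F-Hilbert series are $$\dim_1(A)=\sum_{i=1}^k\mathrm{Tr}(u_i)\mathrm{Tr}(u_i^{-1}),\qquad \dim_x(A)=\sum_{i=1}^k\frac{d_i\mathrm{Tr}(u_i)}{1-d_i^{-1}\mathrm{Tr}(u_i^{-1})x},$$ its counit scale factor is $\dim_0(A)=\sum_i d_i\mathrm{Tr}(u_i)$, and it is quasispecial with scale factor $\lambda$ if and only if $\mathrm{Tr}(u_i^{-1})/d_i=\lambda$ for all $i$.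
   Context: A Frobenius algebra is a unital $\mathbb K$-algebra $A$ with a bilinear form $(\ ,\ )$ satisfying $(ab,c)=(a,bc)$ whose induced map $A\to A^*$ is invertible; its inverse is $g=\sum g^1\otimes g^2\in A\otimes A$ with $\sum (a,g^1)g^2=a=\sum g^1(g^2,a)$. Write $\epsilon(a):=(1,a)$ and $\ell:=\sum g^1g^2$. F-dimensions: $\dim_j(A):=\epsilon(\ell^j)$, $\dim_x(A):=\sum_{j\ge0}x^j\dim_j(A)$ (formal power series). Quasispecial with scale factor $\lambda$ means $\ell=\lambda1$ with $\lambda\ne0$; special means $\ell=1$. *)

(* Defs.v *)
From HB Require Import structures.
From mathcomp Require Import all_boot all_order all_algebra.
Set Implicit Arguments. Unset Strict Implicit. Unset Printing Implicit Defensive.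
Import Order.TTheory GRing.Theory Num.Theory.
Local Open Scope ring_scope.

Section MatSum.
Variables (K : fieldType) (k : nat) (d : 'I_k -> nat).

Definition alg := forall i : 'I_k, 'M[K]_(d i).

Definition alg_zero : alg := fun i => 0.
Definition alg_one : alg := fun i => 1%:M.
Definition alg_add (a b : alg) : alg := fun i => a i + b i.
Definition alg_mul (a b : alg) : alg := fun i => a i *m b i.
Definition alg_scale (c : K) (a : alg) : alg := fun i => c *: a i.
Definition alg_pow (a : alg) (j : nat) : alg := iter j (alg_mul a) alg_one.

Definition eps0 (a : alg) : K := \sum_(i < k) (d i)%:R * \tr (a i).

Definition twform (u a b : alg) : K := eps0 (alg_mul u (alg_mul a b)).

(* an element g = sum_j g1_j (x) g2_j of A (x) A, given as a finite list of
   simple tensors, is the inverse of the induced map A -> A^* iff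
   sum (a, g1) g2 = a  and  sum g1 (g2, a) = a for all a *)
Definition is_copairing (B : alg -> alg -> K) (g : seq (alg * alg)) : Prop :=
  (forall a, foldr (fun p acc => alg_add (alg_scale (B a p.1) p.2) acc) alg_zero g = a) /\
  (forall a, foldr (fun p acc => alg_add (alg_scale (B p.2 a) p.1) acc) alg_zero g = a).

Definition ell (g : seq (alg * alg)) : alg :=
  foldr (fun p acc => alg_add (alg_mul p.1 p.2) acc) alg_zero g.

Definition counit (B : alg -> alg -> K) (a : alg) : K := B alg_one a.

Definition Fdim (B : alg -> alg -> K) (g : seq (alg * alg)) (j : nat) : K :=
  counit B (alg_pow (ell g) j).

Definition quasispecial_with (g : seq (alg * alg)) (lam : K) : Prop :=
  ell g = alg_scale lam alg_one /\ lam != 0.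

End MatSum.

(* Main.v *)
Require Import Defs.
From HB Require Import structures.
From mathcomp Require Import all_boot all_order all_algebra.
From Stdlib Require Import FunctionalExtensionality.
Import Order.TTheory GRing.Theory Num.Theory.
Set Implicit Arguments. Unset Strict Implicit. Unset Printing Implicit Defensive.
Local Open Scope ring_scope.
Lemma mulDl_entry (K : fieldType) n (X : 'M[K]_n) (p q r c : 'I_n) :
  (delta_mx p q *m X) r c = (r == p)%:R * X q c.
Proof.
rewrite !mxE (bigD1 q) //= big1 => [|s /negPf ns]; rewrite !mxE ?eqxx ?ns.
  by rewrite andbT addr0.
by rewrite andbF mul0r.
Qed.

Lemma mulDr_entry (K : fieldType) n (X : 'M[K]_n) (p q r c : 'I_n) :
  (X *m delta_mx p q) r c = X r p * (c == q)%:R.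
Proof.
rewrite !mxE (bigD1 p) //= big1 => [|s /negPf ns]; rewrite !mxE ?eqxx ?ns.
  by rewrite addr0.
by rewrite mulr0.
Qed.

Lemma tr_mul_delta (K : fieldType) n (X : 'M[K]_n) (p q : 'I_n) :
  \tr (X *m delta_mx p q) = X q p.
Proof.
rewrite /mxtrace (bigD1 q) //= big1 => [|s ns]; rewrite mulDr_entry.
  by rewrite eqxx mulr1 addr0.
by rewrite (negPf ns) mulr0.
Qed.

Lemma sumE (K : fieldType) m n I (r : seq I) (P : pred I) (E : I -> 'M[K]_(m, n)) i j :
  (\sum_(k <- r | P k) E k) i j = \sum_(k <- r | P k) E k i j.
Proof. exact: (@summxE _ m n). Qed.

Lemma sum_delta_conj (K : fieldType) n (W : 'M[K]_n) :
  \sum_(p < n) \sum_(q < n) delta_mx p q *m (W *m delta_mx q p) = \tr W *: 1%:M.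
Proof.
apply/matrixP => r c.
idtac.
have E : forall p : 'I_n, (\sum_(q < n) delta_mx p q *m (W *m delta_mx q p)) r c
   = (r == p)%:R * (c == p)%:R * \tr W.
  move=> p; rewrite sumE /mxtrace big_distrr /=; apply: eq_bigr => q _.
  by rewrite mulDl_entry mulDr_entry [W q q * _]mulrC mulrA.
rewrite sumE; under eq_bigr => p _ do rewrite E.
rewrite (bigD1 r) //= big1 => [|p pr]; last by rewrite eq_sym (negPf pr) !mul0r.
by rewrite !mxE eqxx mul1r addr0 mulrC eq_sym.
Qed.

Definition Eb (K : fieldType) k (d : 'I_k -> nat) (i : 'I_k) (p q : 'I_(d i)) : alg K d :=
  fun j => \matrix_(r, s) (((i == j) && (nat_of_ord r == p) && (nat_of_ord s == q))%:R : K).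

Lemma Eb_same K k d i p q : @Eb K k d i p q i = delta_mx p q.
Proof. by apply/matrixP => r s; rewrite !mxE eqxx. Qed.

Lemma Eb_other K k d i p q j : i != j -> @Eb K k d i p q j = 0.
Proof. by move=> ij; apply/matrixP => r s; rewrite !mxE (negPf ij). Qed.

Lemma foldr_eval K k (d : 'I_k -> nat) (F : alg K d * alg K d -> alg K d) g i :
  foldr (fun p acc => alg_add (F p) acc) (alg_zero K d) g i = \sum_(p <- g) F p i.
Proof.
elim: g => [|x g IH] /=; first by rewrite big_nil.
by rewrite big_cons -IH.
Qed.

Lemma eps0_single K k (d : 'I_k -> nat) (x : alg K d) i0 :
  (forall j, j != i0 -> x j = 0) -> eps0 x = (d i0)%:R * \tr (x i0).
Proof.
move=> H; rewrite /eps0 (bigD1 i0) //= big1 ?addr0 // => j /H ->.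
by rewrite mxtrace0 mulr0.
Qed.

Definition wv K k (d : 'I_k -> nat) (u : alg K d) : alg K d :=
  fun j => (d j)%:R^-1 *: invmx (u j).

Definition g0 K k (d : 'I_k -> nat) (u : alg K d) : seq (alg K d * alg K d) :=
  flatten [seq flatten [seq [seq (@Eb K k d i p q, alg_mul (wv u) (@Eb K k d i q p))
     | q <- index_enum 'I_(d i)] | p <- index_enum 'I_(d i)] | i <- index_enum 'I_k].

Lemma sum_g0 K k (d : 'I_k -> nat) (u : alg K d) (V : zmodType)
  (F : alg K d * alg K d -> V) :
  \sum_(x <- g0 u) F x = \sum_(i < k) \sum_(p < d i) \sum_(q < d i)
      F (@Eb K k d i p q, alg_mul (wv u) (@Eb K k d i q p)).
Proof.
rewrite big_flatten big_map; apply: eq_bigr => i _.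
rewrite big_flatten big_map; apply: eq_bigr => p _.
by rewrite big_map.
Qed.

Lemma g0_cond1 K k (d : 'I_k -> nat) (u : alg K d)
  (dnz : forall i, (d i)%:R != 0 :> K) (uu : forall i, u i \in unitmx) a i0 :
  \sum_(x <- g0 u) (alg_scale (twform u a x.1) x.2) i0 = a i0.
Proof.
rewrite sum_g0 (bigD1 i0) //= [X in _ + X = _]big1 ?addr0; last first.
  move=> i ni; apply: big1 => p _; apply: big1 => q _.
  by rewrite /alg_scale /alg_mul Eb_other // mulmx0 scaler0.
have E : forall p q : 'I_(d i0),
   alg_scale (twform u a (Eb K p q)) (alg_mul (wv u) (Eb K q p)) i0
   = invmx (u i0) *m (((u i0) *m (a i0)) q p *: delta_mx q p).
  move=> p q; rewrite /alg_scale /twform (@eps0_single _ _ _ _ i0); last first.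
    by move=> j nj; rewrite /alg_mul Eb_other 1?eq_sym // !mulmx0.
  rewrite /alg_mul /wv !Eb_same mulmxA tr_mul_delta -scalemxAl scalerA.
  by rewrite mulrAC mulfV // mul1r scalemxAr.
under eq_bigr => p _ do under eq_bigr => q _ do rewrite E.
under eq_bigr => p _ do rewrite -mulmx_sumr.
rewrite -mulmx_sumr exchange_big /= -matrix_sum_delta.
by rewrite mulKmx.
Qed.

Lemma g0_cond2 K k (d : 'I_k -> nat) (u : alg K d)
  (dnz : forall i, (d i)%:R != 0 :> K) (uu : forall i, u i \in unitmx) a i0 :
  \sum_(x <- g0 u) (alg_scale (twform u x.2 a) x.1) i0 = a i0.
Proof.
rewrite sum_g0 (bigD1 i0) //= [X in _ + X = _]big1 ?addr0; last first.
  move=> i ni; apply: big1 => p _; apply: big1 => q _.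
  by rewrite /alg_scale Eb_other // scaler0.
have E : forall p q : 'I_(d i0),
   alg_scale (twform u (alg_mul (wv u) (Eb K q p)) a) (Eb K p q) i0
   = a i0 p q *: delta_mx p q.
  move=> p q; rewrite /alg_scale /twform (@eps0_single _ _ _ _ i0); last first.
    by move=> j nj; rewrite /alg_mul Eb_other 1?eq_sym // !mulmx0 mul0mx mulmx0.
  rewrite /alg_mul /wv !Eb_same -!scalemxAl -scalemxAr mxtraceZ.
  rewrite !mulmxA mulmxV // mul1mx mulrA mulfV // mul1r.
  by rewrite mxtrace_mulC tr_mul_delta.
under eq_bigr => p _ do under eq_bigr => q _ do rewrite E.
by rewrite -matrix_sum_delta.
Qed.

Lemma g0_ell K k (d : 'I_k -> nat) (u : alg K d) i0 :
  \sum_(x <- g0 u) (alg_mul x.1 x.2) i0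
    = ((d i0)%:R^-1 * \tr (invmx (u i0))) *: 1%:M.
Proof.
rewrite sum_g0 (bigD1 i0) //= [X in _ + X = _]big1 ?addr0; last first.
  move=> i ni; apply: big1 => p _; apply: big1 => q _.
  by rewrite /alg_mul Eb_other // mul0mx.
rewrite -mxtraceZ -sum_delta_conj; apply: eq_bigr => p _; apply: eq_bigr => q _.
by rewrite /alg_mul !Eb_same.
Qed.

Lemma ell_eq K k (d : 'I_k -> nat) (u : alg K d)
  (dnz : forall i, (d i)%:R != 0 :> K) (uu : forall i, u i \in unitmx) g :
  is_copairing (twform u) g -> forall i0,
  ell g i0 = ((d i0)%:R^-1 * \tr (invmx (u i0))) *: 1%:M.
Proof.
move=> [_ c2] i0; rewrite /ell foldr_eval.
transitivity (\sum_(x <- g) \sum_(z <- g0 u)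
                 twform u x.2 z.1 *: (x.1 i0 *m z.2 i0)).
  apply: eq_bigr => x _; rewrite /alg_mul -(g0_cond1 dnz uu x.2 i0) mulmx_sumr.
  by apply: eq_bigr => z _; rewrite /alg_scale scalemxAr.
rewrite exchange_big -(g0_ell u i0); apply: eq_bigr => z _.
have := congr1 (fun f => f i0) (c2 z.1); rewrite /= foldr_eval => E.
rewrite /alg_mul -[in RHS]E mulmx_suml; apply: eq_bigr => x _.
by rewrite /alg_scale scalemxAl.
Qed.

Theorem mainTheorem4 (K : fieldType) (k : nat) (d : 'I_k -> nat)
    (charK0 : [pchar K] =i pred0)
    (d_pos : forall i, (0 < d i)%N)
    (u : alg K d) (u_unit : forall i, u i \in unitmx) :
  let B := twform u in
  (exists g, is_copairing B g) /\
  forall g, is_copairing B g ->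
    [/\ Fdim B g 1 = \sum_(i < k) \tr (u i) * \tr (invmx (u i)),
        (forall j : nat, Fdim B g j =
           \sum_(i < k) (d i)%:R * \tr (u i) * ((d i)%:R^-1 * \tr (invmx (u i))) ^+ j),
        Fdim B g 0 = \sum_(i < k) (d i)%:R * \tr (u i)
      & forall lam : K, quasispecial_with g lam <->
          (lam != 0 /\ forall i, \tr (invmx (u i)) / (d i)%:R = lam)].
Proof.
intros B; unfold B.
have dnz : forall i, (d i)%:R != 0 :> K.
  by move=> i; move/pcharf0P: charK0 => ->; rewrite -lt0n d_pos.
split.
  exists (g0 u); split => a; apply: functional_extensionality_dep => i0;
    rewrite foldr_eval; [exact: g0_cond1 | exact: g0_cond2].
move=> g cg.
have L := ell_eq dnz u_unit cg.
have P : forall j i, alg_pow (ell g) j i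
    = ((d i)%:R^-1 * \tr (invmx (u i))) ^+ j *: 1%:M.
  move=> j i; elim: j => [|j IH]; first by rewrite /alg_pow /= /alg_one scale1r.
  change (ell g i *m alg_pow (ell g) j i = ((d i)%:R^-1 * \tr (invmx (u i))) ^+ j.+1 *: 1%:M).
  by rewrite L IH -scalemxAl mul1mx scalerA exprS.
have FD : forall j : nat, Fdim (twform u) g j =
    \sum_(i < k) (d i)%:R * \tr (u i) * ((d i)%:R^-1 * \tr (invmx (u i))) ^+ j.
  move=> j; rewrite /Fdim /counit /twform /eps0; apply: eq_bigr => i _.
  rewrite /alg_mul /alg_one P mul1mx -scalemxAr mulmx1 mxtraceZ.
  by rewrite [_ ^+ j * _]mulrC mulrA.
split => //.
- rewrite FD; apply: eq_bigr => i _.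
  by rewrite expr1 -mulrA mulrCA mulVKf.
- by rewrite FD; apply: eq_bigr => i _; rewrite expr0 mulr1.
move=> lam; split.
  move=> [E ln]; split => // i.
  have := congr1 (fun f => f i) E; rewrite /= L /alg_scale /alg_one.
  move/matrixP/(_ (Ordinal (d_pos i)) (Ordinal (d_pos i))).
  by rewrite !mxE eqxx !mulr1 => <-; rewrite mulrC.
move=> [ln H]; split => //; apply: functional_extensionality_dep => i.
by rewrite L /alg_scale /alg_one -(H i) mulrC.
Qed.
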